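(* Let $S>0$, $T>0$, $\sigma_{LN}>0$ and let $C:=\mathrm{BS}(S,S,T,\sigma_{LN})$ be the at-the-money ($K=S$) Black–Scholes call price with zero interest rate, where $\mathrm{BS}(S,K,T,\sigma)=S\,\mathcal N(d_+)-K\,\mathcal N(d_-)$, $d_\pm=\frac{\ln(S/K)\pm\sigma^2T/2}{\sigma\sqrt T}$, $\mathcal N$ the standard normal distribution function. Define $\eta_0:=1$ and, for $k\ge1$, $\eta_k:=\sum_{j=0}^{k-1}\frac{\eta_j\,\eta_{k-1-j}}{(j+1)(2j+1)}$. Then $$\sigma_{LN}=\sqrt{\frac{2\pi}{T}}\,\frac CS\sum_{k=0}^\infty\frac{\pi^k\eta_k}{4^k(2k+1)}\Big(\frac CS\Big)^{2k}.$$ *)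

(* Defs.v *)
From Stdlib Require Import Reals List.
From Coquelicot Require Import Coquelicot.
Open Scope R_scope.

Definition normal_cdf (x : R) : R :=
  RInt_gen (fun t => exp (- (t ^ 2) / 2) / sqrt (2 * PI)) (Rbar_locally m_infty) (at_point x).

Definition d_plus (S K T sigma : R) : R :=
  (ln (S / K) + sigma ^ 2 * T / 2) / (sigma * sqrt T).
Definition d_minus (S K T sigma : R) : R :=
  (ln (S / K) - sigma ^ 2 * T / 2) / (sigma * sqrt T).
Definition BS (S K T sigma : R) : R :=
  S * normal_cdf (d_plus S K T sigma) - K * normal_cdf (d_minus S K T sigma).

(* eta_0 = 1, eta_k = sum_{j=0}^{k-1} eta_j eta_{k-1-j} / ((j+1)(2j+1)).
   etas n is the list [eta_0; ...; eta_n]. *)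
Fixpoint etas (n : nat) : list R :=
  match n with
  | O => 1 :: nil
  | S k =>
      let l := etas k in
      l ++ (fold_right Rplus 0
              (map (fun j => nth j l 0 * nth (k - j) l 0
                             / ((INR j + 1) * (2 * INR j + 1))) (seq 0 (S k)))) :: nil
  end.

Definition eta (k : nat) : R := nth k (etas k) 0.

(* Main.v *)
Require Import Defs.
From Stdlib Require Import Reals List Lia Lra Classical.
From Coquelicot Require Import Coquelicot.
Open Scope R_scope.

Lemma etas_len n : length (etas n) = S n.
Proof. induction n; simpl; auto. rewrite length_app, IHn. simpl. lia. Qed.

Lemma etas_stable n k : (k <= n)%nat -> nth k (etas n) 0 = eta k.
Proof.
  induction n; intros H.
  - assert (k = 0%nat) by lia. subst. reflexivity.
  - destruct (Nat.eq_dec k (S n)) as [->|Hk]; [reflexivity|].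
    change (etas (S n)) with (etas n ++ (fold_right Rplus 0
              (map (fun j => nth j (etas n) 0 * nth (n - j) (etas n) 0
                             / ((INR j + 1) * (2 * INR j + 1))) (seq 0 (S n)))) :: nil).
    rewrite app_nth1. apply IHn; lia. rewrite etas_len; lia.
Qed.

Lemma fold_plus a l : fold_right Rplus a l = a + fold_right Rplus 0 l.
Proof. induction l; simpl; [lra|]. rewrite IHl. lra. Qed.

Lemma fold_seq f n : fold_right Rplus 0 (map f (seq 0 (S n))) = sum_f_R0 f n.
Proof.
  induction n. simpl. lra.
  rewrite seq_S, map_app, fold_right_app, fold_plus, IHn. simpl. lra.
Qed.

Definition gcoef (k : nat) : R := eta k / ((INR k + 1) * (2 * INR k + 1)).
Definition bcoef (k : nat) : R := eta k / (2 * INR k + 1).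

Lemma eta0 : eta 0 = 1.
Proof. reflexivity. Qed.

Lemma etas_S n : etas (S n) = etas n ++ (fold_right Rplus 0
              (map (fun j => nth j (etas n) 0 * nth (n - j) (etas n) 0
                             / ((INR j + 1) * (2 * INR j + 1))) (seq 0 (S n)))) :: nil.
Proof. reflexivity. Qed.

Lemma eta_S k : eta (S k) = sum_f_R0 (fun j => gcoef j * eta (k - j)) k.
Proof.
  unfold eta at 1. rewrite etas_S.
  rewrite app_nth2; rewrite etas_len; [|lia]. rewrite Nat.sub_diag. cbn [nth].
  rewrite fold_seq. apply sum_eq. intros i Hi.
  rewrite !etas_stable; try lia. unfold gcoef.
  assert (0 <= INR i) by apply pos_INR. field. lra.
Qed.

Lemma sum_pos_le (An : nat -> R) N : (forall i, (i <= N)%nat -> 0 <= An i) -> 0 <= sum_f_R0 An N.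
Proof.
  induction N; intros H; simpl. apply H; lia.
  apply Rplus_le_le_0_compat. apply IHN; intros; apply H; lia. apply H; lia.
Qed.

Lemma eta_nonneg k : 0 <= eta k.
Proof.
  assert (forall n k, (k <= n)%nat -> 0 <= eta k). 2: eauto.
  induction n; intros j Hj.
  - assert (j = 0%nat) by lia. subst. rewrite eta0. lra.
  - destruct (Nat.eq_dec j (S n)) as [->|]; [|apply IHn; lia].
    rewrite eta_S. apply sum_pos_le. intros i Hi.
    unfold gcoef. assert (0 <= INR i) by apply pos_INR.
    apply Rmult_le_pos; [|apply IHn; lia].
    apply Rmult_le_pos; [apply IHn; lia|]. left; apply Rinv_0_lt_compat; nra.
Qed.

Lemma gcoef_nonneg k : 0 <= gcoef k.
Proof. unfold gcoef. assert (0 <= INR k) by apply pos_INR. pose proof (eta_nonneg k).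
  apply Rmult_le_pos; auto. left; apply Rinv_0_lt_compat; nra. Qed.
Lemma bcoef_nonneg k : 0 <= bcoef k.
Proof. unfold bcoef. assert (0 <= INR k) by apply pos_INR. pose proof (eta_nonneg k).
  apply Rmult_le_pos; auto. left; apply Rinv_0_lt_compat; nra. Qed.
Lemma deriv_cont f x l : is_derive f x l -> continuity_pt f x.
Proof. intros H. apply continuity_pt_filterlim. apply (ex_derive_continuous f). exists l; auto. Qed.

Lemma deriv_nonneg_le (f df : R -> R) a b : a <= b ->
  (forall x, a <= x <= b -> is_derive f x (df x)) ->
  (forall x, a <= x <= b -> 0 <= df x) -> f a <= f b.
Proof.
  intros Hab Hd Hp. destruct (MVT_gen f a b df) as [c [Hc Heq]].
  - intros x Hx. rewrite Rmin_left, Rmax_right in Hx by lra. apply Hd; lra.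
  - intros x Hx. rewrite Rmin_left, Rmax_right in Hx by lra. eapply deriv_cont, Hd; lra.
  - rewrite Rmin_left, Rmax_right in Hc by lra. specialize (Hp c Hc). nra.
Qed.

Lemma deriv_zero_eq (f : R -> R) a b : a <= b ->
  (forall x, a <= x <= b -> is_derive f x 0) -> f a = f b.
Proof.
  intros Hab Hd. destruct (Req_dec a b) as [->|]; auto.
  apply (eq_is_derive f); auto. lra.
Qed.

Definition phi (t : R) : R := exp (- (t ^ 2) / 2) / sqrt (2 * PI).
Definition E2 (u : R) : R := RInt phi 0 u.

Lemma sqrt2PI_pos : 0 < sqrt (2 * PI).
Proof. apply sqrt_lt_R0. pose proof PI_RGT_0. lra. Qed.

Lemma phi_deriv x : is_derive phi x ((- x) * phi x).
Proof. unfold phi. pose proof sqrt2PI_pos. auto_derive; auto. replace (- (x * (x * 1)) * / 2) with (- x ^ 2 / 2) by (unfold Rdiv; ring). field. lra. Qed.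

Lemma phi_cont x : continuous phi x.
Proof. apply (ex_derive_continuous (K:=R_AbsRing) (V:=R_NormedModule) phi). eexists; apply phi_deriv. Qed.

Lemma E2_deriv u : is_derive E2 u (phi u).
Proof.
  apply is_derive_RInt with 0.
  - apply filter_forall. intros b. unfold E2. apply (RInt_correct (V:=R_CompleteNormedModule)), (ex_RInt_continuous (V:=R_CompleteNormedModule)).
    intros; apply phi_cont.
  - apply phi_cont.
Qed.

Lemma E2_0 : E2 0 = 0.
Proof. unfold E2. apply (RInt_point (V:=R_CompleteNormedModule)). Qed.

Definition E (s : R) : R := sqrt PI * E2 (sqrt 2 * s).

Lemma E_deriv s : is_derive E s (exp (- s ^ 2)).
Proof.
  unfold E. 
  assert (H : is_derive (fun s => E2 (sqrt 2 * s)) s (sqrt 2 * phi (sqrt 2 * s))).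
  { apply (is_derive_comp E2 (fun s => sqrt 2 * s)). apply E2_deriv. auto_derive; auto. ring. }
  eapply is_derive_ext; [intros; reflexivity|].
  replace (exp (- s ^ 2)) with (sqrt PI * (sqrt 2 * phi (sqrt 2 * s))).
  apply is_derive_scal; auto.
  unfold phi. rewrite sqrt_mult_alt by lra. pose proof PI_RGT_0.
  assert (0 < sqrt 2) by (apply sqrt_lt_R0; lra). assert (0 < sqrt PI) by (apply sqrt_lt_R0; lra).
  replace (- (sqrt 2 * s) ^ 2 / 2) with (- s ^ 2).
  field. split; lra.
  replace ((sqrt 2 * s)^2) with (sqrt 2 ^2 * s^2) by ring. rewrite pow2_sqrt by lra. field.
Qed.

Lemma E_0 : E 0 = 0.
Proof. unfold E. rewrite Rmult_0_r, E2_0. ring. Qed.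

Lemma E_lt u v : u < v -> E u < E v.
Proof.
  intros H. destruct (MVT_gen E u v (fun s => exp (- s ^ 2))) as [c [_ Heq]].
  - intros; apply E_deriv.
  - intros; eapply deriv_cont, E_deriv.
  - pose proof (exp_pos (- c ^ 2)). nra.
Qed.

Lemma E_inj u v : E u = E v -> u = v.
Proof.
  intros H. destruct (Rtotal_order u v) as [h|[h|h]]; auto.
  apply E_lt in h; lra. apply E_lt in h; lra.
Qed.

Definition Pn n y := sum_f_R0 (fun k => eta k * y ^ (2 * k)) n.
Definition Hn n y := sum_f_R0 (fun k => bcoef k * y ^ (2 * k + 1)) n.
Definition Gn n y := sum_f_R0 (fun k => gcoef k * y ^ (2 * k + 2)) n.

Lemma is_derive_sumf (f : nat -> R -> R) (d : nat -> R) n x :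
  (forall k, (k <= n)%nat -> is_derive (f k) x (d k)) ->
  is_derive (fun y => sum_f_R0 (fun k => f k y) n) x (sum_f_R0 d n).
Proof.
  intros H. pose proof (is_derive_sum_n (K:=R_AbsRing) (V:=R_NormedModule) f n x d H) as H2.
  rewrite sum_n_Reals in H2. eapply is_derive_ext; [|exact H2].
  intros t. simpl. rewrite sum_n_Reals. reflexivity.
Qed.

Lemma INR_2k1 k : INR (2 * k + 1) = 2 * INR k + 1.
Proof. rewrite plus_INR, mult_INR. simpl. ring. Qed.
Lemma INR_2k2 k : INR (2 * k + 2) = 2 * INR k + 2.
Proof. rewrite plus_INR, mult_INR. simpl. ring. Qed.

Lemma Hn_deriv n s : is_derive (fun s => Hn n (E s)) s (Pn n (E s) * exp (- s ^ 2)).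
Proof.
  unfold Hn, Pn. rewrite Rmult_comm, scal_sum.
  apply (is_derive_sumf (fun k s => bcoef k * E s ^ (2 * k + 1))).
  intros k _.
  replace (eta k * E s ^ (2 * k) * exp (- s ^ 2)) with
    (bcoef k * (INR (2 * k + 1) * exp (- s ^ 2) * E s ^ Nat.pred (2 * k + 1))).
  apply is_derive_scal, is_derive_pow, E_deriv.
  replace (Nat.pred (2 * k + 1)) with (2 * k)%nat by lia.
  rewrite INR_2k1. unfold bcoef. assert (0 <= INR k) by apply pos_INR. field. lra.
Qed.

Lemma Gn_deriv n s : is_derive (fun s => Gn n (E s)) s (2 * Hn n (E s) * exp (- s ^ 2)).
Proof.
  unfold Hn, Gn.
  replace (2 * sum_f_R0 (fun k => bcoef k * E s ^ (2 * k + 1)) n * exp (- s ^ 2)) with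
    (sum_f_R0 (fun k => bcoef k * E s ^ (2 * k + 1) * (exp (- s ^ 2) * 2)) n)
    by (rewrite <- scal_sum; ring).
  apply (is_derive_sumf (fun k s => gcoef k * E s ^ (2 * k + 2))).
  intros k _.
  replace (bcoef k * E s ^ (2 * k + 1) * (exp (- s ^ 2) * 2)) with
    (gcoef k * (INR (2 * k + 2) * exp (- s ^ 2) * E s ^ Nat.pred (2 * k + 2))).
  apply is_derive_scal, is_derive_pow, E_deriv.
  replace (Nat.pred (2 * k + 2)) with (2 * k + 1)%nat by lia.
  rewrite INR_2k2. unfold bcoef, gcoef. assert (0 <= INR k) by apply pos_INR. field. lra.
Qed.

Lemma E_nonneg s : 0 <= s -> 0 <= E s.
Proof. intros [H| <-]. left. rewrite <- E_0. apply E_lt; auto. rewrite E_0; lra. Qed.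

Lemma sum_zero_at0 (a : nat -> R) (p : nat -> nat) n : (forall k, (0 < p k)%nat) ->
  sum_f_R0 (fun k => a k * 0 ^ p k) n = 0.
Proof.
  intros H. rewrite (sum_eq _ (fun _ => 0)). rewrite sum_cte. ring.
  intros i _. rewrite pow_i by auto. ring.
Qed.

Lemma Pn_nonneg n y : 0 <= y -> 0 <= Pn n y.
Proof. intros. apply cond_pos_sum. intros k. apply Rmult_le_pos. apply eta_nonneg. apply pow_le; auto. Qed.

Lemma H_bound n : (forall s, 0 <= s -> Pn n (E s) <= exp (s ^ 2)) ->
  forall s, 0 <= s -> Hn n (E s) <= s.
Proof.
  intros HP s Hs.
  assert (0 - Hn n (E 0) <= s - Hn n (E s)).
  { apply (deriv_nonneg_le (fun s => s - Hn n (E s)) (fun s => 1 - Pn n (E s) * exp (- s ^ 2))); auto.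
    - intros x _. apply (is_derive_minus (K:=R_AbsRing) (V:=R_NormedModule) (fun s => s) (fun s => Hn n (E s)) x 1). 
      apply (is_derive_id (K:=R_AbsRing)). apply Hn_deriv.
    - intros x Hx. specialize (HP x (proj1 Hx)).
      pose proof (exp_pos (- x ^ 2)).
      assert (exp (x ^ 2) * exp (- x ^ 2) = 1) by (rewrite <- exp_plus; replace (x^2 + - x^2) with 0 by ring; apply exp_0).
      assert (Pn n (E x) * exp (- x ^ 2) <= exp (x ^ 2) * exp (- x ^ 2)) by (apply Rmult_le_compat_r; lra).
      lra. }
  rewrite E_0 in H. unfold Hn in H |- *. rewrite sum_zero_at0 in H by (intros; lia). lra.
Qed.

Lemma G_bound n : (forall s, 0 <= s -> Hn n (E s) <= s) ->
  forall s, 0 <= s -> Gn n (E s) <= 1 - exp (- s ^ 2).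
Proof.
  intros HH s Hs.
  assert (1 - exp (- 0 ^ 2) - Gn n (E 0) <= 1 - exp (- s ^ 2) - Gn n (E s)).
  { apply (deriv_nonneg_le (fun s => 1 - exp (- s ^ 2) - Gn n (E s))
       (fun s => 2 * s * exp (- s ^ 2) - 2 * Hn n (E s) * exp (- s ^ 2))); auto.
    - intros x _.
      apply (is_derive_minus (K:=R_AbsRing) (V:=R_NormedModule) (fun s => 1 - exp (- s ^ 2)) (fun s => Gn n (E s)) x).
      2: apply Gn_deriv. auto_derive; auto. replace (- (x * (x * 1))) with (- x ^ 2) by ring. ring.
    - intros x Hx. specialize (HH x (proj1 Hx)). pose proof (exp_pos (- x ^ 2)). nra. }
  rewrite E_0 in H. unfold Gn in H |- *. rewrite sum_zero_at0 in H by (intros; lia).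
  replace (- 0 ^ 2) with 0 in H by ring. rewrite exp_0 in H. lra.
Qed.

Lemma exp_mono x y : x <= y -> exp x <= exp y.
Proof. intros [H| ->]; [left; apply exp_increasing; auto|lra]. Qed.

Lemma P_step n y : 0 <= y -> Pn (S n) y <= 1 + Gn n y * Pn n y.
Proof.
  intros Hy.
  set (An := fun j => gcoef j * y ^ (2 * j + 2)).
  set (Bn := fun m => eta m * y ^ (2 * m)).
  assert (HA : forall j, 0 <= An j) by (intros; apply Rmult_le_pos; [apply gcoef_nonneg|apply pow_le; auto]).
  assert (HB : forall j, 0 <= Bn j) by (intros; apply Rmult_le_pos; [apply eta_nonneg|apply pow_le; auto]).
  unfold Pn at 1. rewrite decomp_sum by lia. simpl pred.
  rewrite eta0, Nat.mul_0_r, pow_O.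
  assert (Heq : sum_f_R0 (fun i => eta (S i) * y ^ (2 * S i)) n =
     sum_f_R0 (fun k => sum_f_R0 (fun p => An p * Bn (k - p)%nat) k) n).
  { apply sum_eq; intros i _. rewrite eta_S, Rmult_comm, scal_sum. apply sum_eq; intros j Hj.
    unfold An, Bn. replace (2 * S i)%nat with ((2 * j + 2) + 2 * (i - j))%nat by lia.
    rewrite pow_add. ring. }
  rewrite Heq.
  assert (Hp : Gn n y * Pn n y = sum_f_R0 An n * sum_f_R0 Bn n) by reflexivity.
  destruct n.
  - rewrite Hp. simpl. lra.
  - rewrite Hp, cauchy_finite by lia.
    assert (0 <= sum_f_R0 (fun k => sum_f_R0 (fun l => An (S (l + k)) * Bn (S n - l)%nat)
                                   (Init.Nat.pred (S n - k))) (Init.Nat.pred (S n))).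
    { apply cond_pos_sum; intros. apply cond_pos_sum; intros. apply Rmult_le_pos; auto. }
    lra.
Qed.

Lemma P_bound n : forall s, 0 <= s -> Pn n (E s) <= exp (s ^ 2).
Proof.
  induction n; intros s Hs.
  - unfold Pn, sum_f_R0. rewrite eta0, Nat.mul_0_r, pow_O.
    assert (1 <= exp (s ^ 2)). { rewrite <- exp_0. apply exp_mono. nra. } lra.
  - pose proof (E_nonneg s Hs).
    pose proof (G_bound n (H_bound n IHn) s Hs).
    pose proof (P_step n (E s) H). specialize (IHn s Hs).
    pose proof (Pn_nonneg n (E s) H).
    assert (0 <= 1 - exp (- s ^ 2)).
    { assert (exp (- s ^ 2) <= 1). rewrite <- exp_0. apply exp_mono. nra. lra. }
    assert (exp (s ^ 2) * exp (- s ^ 2) = 1) by (rewrite <- exp_plus; replace (s^2 + - s^2) with 0 by ring; apply exp_0).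
    assert (Gn n (E s) * Pn n (E s) <= (1 - exp (- s ^ 2)) * Pn n (E s)) by (apply Rmult_le_compat_r; auto).
    assert ((1 - exp (- s ^ 2)) * Pn n (E s) <= (1 - exp (- s ^ 2)) * exp (s ^ 2)) by (apply Rmult_le_compat_l; auto).
    nra.
Qed.

Lemma dmult (f g : R -> R) x df dg : is_derive f x df -> is_derive g x dg ->
  is_derive (fun t => f t * g t) x (df * g x + f x * dg).
Proof. intros H1 H2. apply (is_derive_mult f g x df dg H1 H2). intros; apply Rmult_comm. Qed.

Lemma dcomp (f g : R -> R) x df dg : is_derive f (g x) df -> is_derive g x dg ->
  is_derive (fun t => f (g t)) x (dg * df).
Proof. intros H1 H2. apply (is_derive_comp f g x df dg H1 H2). Qed.

Lemma radius_ge (a : nat -> R) r M : (forall n, Rabs (a n * r ^ n) <= M) -> Rbar_le r (CV_radius a).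
Proof. intros H. destruct (CV_radius_bounded a) as [Hub _]. apply Hub. exists M. auto. Qed.

Lemma term_le_Pn n y : 0 <= y -> eta n * (y ^ 2) ^ n <= Pn n y.
Proof.
  intros Hy. rewrite <- pow_mult. destruct n.
  - unfold Pn. simpl. lra.
  - unfold Pn. rewrite tech5. fold (Pn n y). pose proof (Pn_nonneg n y Hy). lra.
Qed.

Section Radius.
Variable s1 : R.
Hypothesis Hs1 : 0 <= s1.
Let z1 := E s1 ^ 2.

Lemma eta_term_bound n : Rabs (eta n * z1 ^ n) <= exp (s1 ^ 2).
Proof.
  pose proof (E_nonneg s1 Hs1).
  rewrite Rabs_pos_eq. eapply Rle_trans. apply term_le_Pn; auto. apply P_bound; auto.
  apply Rmult_le_pos. apply eta_nonneg. apply pow_le. unfold z1. apply pow_le; auto.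
Qed.

Lemma rad_eta : Rbar_le z1 (CV_radius eta).
Proof. apply radius_ge with (exp (s1 ^ 2)). apply eta_term_bound. Qed.

Lemma rad_b : Rbar_le z1 (CV_radius bcoef).
Proof.
  apply radius_ge with (exp (s1 ^ 2)). intros n. eapply Rle_trans; [|apply (eta_term_bound n)].
  assert (0 <= z1 ^ n) by (apply pow_le; unfold z1; apply pow_le, E_nonneg; auto).
  pose proof (eta_nonneg n). pose proof (bcoef_nonneg n).
  rewrite !Rabs_pos_eq by (apply Rmult_le_pos; auto).
  apply Rmult_le_compat_r; auto. unfold bcoef.
  assert (0 <= INR n) by apply pos_INR.
  apply Rmult_le_reg_r with (2 * INR n + 1). lra.
  field_simplify; try lra. assert (0 <= eta n * INR n) by (apply Rmult_le_pos; auto). lra.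
Qed.

Lemma rad_g : Rbar_le z1 (CV_radius gcoef).
Proof.
  apply radius_ge with (exp (s1 ^ 2)). intros n. eapply Rle_trans; [|apply (eta_term_bound n)].
  assert (0 <= z1 ^ n) by (apply pow_le; unfold z1; apply pow_le, E_nonneg; auto).
  pose proof (eta_nonneg n). pose proof (gcoef_nonneg n).
  rewrite !Rabs_pos_eq by (apply Rmult_le_pos; auto).
  apply Rmult_le_compat_r; auto. unfold gcoef.
  assert (0 <= INR n) by apply pos_INR.
  apply Rmult_le_reg_r with ((INR n + 1) * (2 * INR n + 1)). nra.
  field_simplify; try nra.
Qed.
End Radius.

Lemma z_mul_deriv (a : nat -> R) z :
  z * PSeries (PS_derive a) z = PSeries (fun n => INR n * a n) z.
Proof.
  rewrite <- PSeries_incr_1. apply PSeries_ext. intros [|n]; simpl.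
  - unfold zero; simpl. ring.
  - unfold PS_derive. reflexivity.
Qed.

Lemma rad_nmul (a : nat -> R) : CV_radius (fun n => INR n * a n) = CV_radius a.
Proof.
  transitivity (CV_radius (PS_incr_1 (PS_derive a))).
  2: rewrite CV_radius_incr_1; apply CV_radius_derive.
  apply CV_radius_ext. intros [|n]; simpl. unfold zero; simpl; ring. reflexivity.
Qed.

Section Ident.
Variable z1 : R.
Hypothesis Hre : Rbar_le z1 (CV_radius eta).
Hypothesis Hrb : Rbar_le z1 (CV_radius bcoef).
Hypothesis Hrg : Rbar_le z1 (CV_radius gcoef).

Definition A z := PSeries eta z.
Definition B z := PSeries bcoef z.
Definition Gc z := PSeries gcoef z.

Section AtZ.
Variable z : R.
Hypothesis Hz : Rabs z < z1.

Let re : Rbar_lt (Rabs z) (CV_radius eta). Proof. eapply Rbar_lt_le_trans; [|exact Hre]; exact Hz. Qed.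
Let rb : Rbar_lt (Rabs z) (CV_radius bcoef). Proof. eapply Rbar_lt_le_trans; [|exact Hrb]; exact Hz. Qed.
Let rg : Rbar_lt (Rabs z) (CV_radius gcoef). Proof. eapply Rbar_lt_le_trans; [|exact Hrg]; exact Hz. Qed.

Lemma I1 : A z = 1 + z * (Gc z * A z).
Proof.
  unfold A, Gc. rewrite (PSeries_decr_1 eta z) at 1 by (apply CV_radius_inside; auto).
  rewrite eta0. f_equal. f_equal. rewrite <- PSeries_mult by auto.
  apply PSeries_ext. intros n. unfold PS_decr_1. rewrite eta_S. reflexivity.
Qed.

Lemma I2 : B z + 2 * (z * PSeries (PS_derive bcoef) z) = A z.
Proof.
  rewrite z_mul_deriv. unfold A, B.
  rewrite <- (PSeries_scal 2).
  rewrite <- PSeries_plus.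
  - apply PSeries_ext. intros n. unfold PS_plus, PS_scal, bcoef. simpl.
    unfold plus, scal; simpl. unfold mult; simpl. assert (0 <= INR n) by apply pos_INR. field. lra.
  - apply CV_radius_inside; auto.
  - apply CV_radius_inside. rewrite CV_radius_scal by lra. rewrite rad_nmul. auto.
Qed.

Lemma I3 : Gc z + z * PSeries (PS_derive gcoef) z = B z.
Proof.
  rewrite z_mul_deriv. unfold Gc, B.
  rewrite <- PSeries_plus.
  - apply PSeries_ext. intros n. unfold PS_plus, gcoef, bcoef. simpl.
    unfold plus; simpl. assert (0 <= INR n) by apply pos_INR. field. lra.
  - apply CV_radius_inside; auto.
  - apply CV_radius_inside. rewrite rad_nmul. auto.
Qed.

Lemma dA : is_derive A z (PSeries (PS_derive eta) z).
Proof. apply is_derive_PSeries; auto. Qed.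
Lemma dB : is_derive B z (PSeries (PS_derive bcoef) z).
Proof. apply is_derive_PSeries; auto. Qed.
Lemma dG : is_derive Gc z (PSeries (PS_derive gcoef) z).
Proof. apply is_derive_PSeries; auto. Qed.
End AtZ.

Definition Lf y := y * B (y ^ 2).
Definition G2 y := y ^ 2 * Gc (y ^ 2).

Section AtY.
Variable y : R.
Hypothesis Hy : Rabs (y ^ 2) < z1.

Lemma dL : is_derive Lf y (A (y ^ 2)).
Proof.
  rewrite <- (I2 _ Hy).
  eapply is_derive_ext; [intros t; reflexivity|]. unfold Lf.
  replace (B (y ^ 2) + 2 * (y ^ 2 * PSeries (PS_derive bcoef) (y ^ 2)))
    with (1 * B (y ^ 2) + y * ((2 * y) * PSeries (PS_derive bcoef) (y ^ 2))) by ring.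
  apply (dmult (fun t => t) (fun t => B (t ^ 2))). apply (is_derive_id (K:=R_AbsRing)).
  apply (dcomp B (fun t => t ^ 2)). apply dB; auto. auto_derive; auto; ring.
Qed.

Lemma dG2 : is_derive G2 y (2 * Lf y).
Proof.
  unfold Lf. rewrite <- (I3 _ Hy). unfold G2.
  replace (2 * (y * (Gc (y ^ 2) + y ^ 2 * PSeries (PS_derive gcoef) (y ^ 2))))
    with ((2 * y) * Gc (y ^ 2) + y ^ 2 * ((2 * y) * PSeries (PS_derive gcoef) (y ^ 2))) by ring.
  apply (dmult (fun t => t ^ 2) (fun t => Gc (t ^ 2))). auto_derive; auto; ring.
  apply (dcomp Gc (fun t => t ^ 2)). apply dG; auto. auto_derive; auto; ring.
Qed.

Lemma AG : A (y ^ 2) * (1 - G2 y) = 1.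
Proof. unfold G2. pose proof (I1 _ Hy). nra. Qed.

Definition Qf t := exp (- (Lf t) ^ 2) / (1 - G2 t).

Lemma dQ : is_derive Qf y 0.
Proof.
  pose proof AG as HAG.
  assert (Hne : 1 - G2 y <> 0) by (intro h; rewrite h in HAG; lra).
  unfold Qf.
  eapply is_derive_ext; [intros t; reflexivity|].
  replace 0 with ((((- (INR 2 * A (y ^ 2) * Lf y ^ 1)) * exp (- Lf y ^ 2)) * (1 - G2 y)
     - exp (- Lf y ^ 2) * (0 - 2 * Lf y)) / (1 - G2 y) ^ 2).
  apply (is_derive_div (fun t => exp (- Lf t ^ 2)) (fun t => 1 - G2 t)); auto.
  - apply (dcomp exp (fun t => - Lf t ^ 2)). apply is_derive_exp.
    apply (is_derive_opp (K:=R_AbsRing) (V:=R_NormedModule) (fun t => Lf t ^ 2)).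
    replace (INR 2 * A (y ^ 2) * Lf y ^ 1) with (INR 2 * A (y ^ 2) * Lf y ^ Nat.pred 2) by reflexivity.
    apply is_derive_pow. apply dL.
  - apply (is_derive_minus (K:=R_AbsRing) (V:=R_NormedModule) (fun _ => 1) G2).
    auto_derive; auto. apply dG2.
  - symmetry. unfold Rdiv. rewrite <- (Rmult_0_l (/ (1 - G2 y) ^ 2)). f_equal.
    replace (- (INR 2 * A (y ^ 2) * Lf y ^ 1) * exp (- Lf y ^ 2) * (1 - G2 y))
      with (- (2 * Lf y * exp (- Lf y ^ 2)) * (A (y ^ 2) * (1 - G2 y))) by (simpl; ring).
    rewrite HAG. ring.
Qed.
End AtY.
End Ident.

Lemma core b0 : 0 < b0 ->
  Rbar_lt (Rabs (E b0 ^ 2)) (CV_radius bcoef) /\ E b0 * PSeries bcoef (E b0 ^ 2) = b0.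
Proof.
  intros Hb.
  set (s1 := b0 + 1). set (z1 := E s1 ^ 2). set (y0 := E b0).
  assert (Hs1 : 0 <= s1) by (unfold s1; lra).
  pose proof (rad_eta s1 Hs1) as Re. pose proof (rad_b s1 Hs1) as Rb. pose proof (rad_g s1 Hs1) as Rg.
  fold z1 in Re, Rb, Rg.
  assert (Hy0 : 0 <= y0) by (apply E_nonneg; lra).
  assert (Hy01 : y0 < E s1) by (apply E_lt; unfold s1; lra).
  assert (Hin : forall t, 0 <= t <= y0 -> Rabs (t ^ 2) < z1).
  { intros t Ht. rewrite Rabs_pos_eq by nra. unfold z1. nra. }
  split.
  { eapply Rbar_lt_le_trans; [|exact Rb]. apply (Hin y0). lra. }
  assert (HQ0 : Qf 0 = 1).
  { unfold Qf, Lf, G2. replace (- (0 * B (0 ^ 2)) ^ 2) with 0 by ring. rewrite exp_0. field_simplify; auto. }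
  assert (HQ : forall t, 0 <= t <= y0 -> Qf t = 1).
  { intros t Ht. rewrite <- HQ0. symmetry. apply deriv_zero_eq. lra.
    intros x Hx. apply (dQ z1 Re Rb Rg). apply Hin. lra. }
  assert (HW : E (Lf 0) - 0 = E (Lf y0) - y0).
  { apply (deriv_zero_eq (fun t => E (Lf t) - t)); auto.
    intros t Ht. 
    replace 0 with (A (t ^ 2) * exp (- Lf t ^ 2) - 1).
    apply (is_derive_minus (K:=R_AbsRing) (V:=R_NormedModule) (fun t => E (Lf t)) (fun t => t)).
    apply (dcomp E Lf). apply E_deriv. apply (dL z1 Rb); apply Hin; lra.
    apply (is_derive_id (K:=R_AbsRing)).
    pose proof (HQ t Ht) as Q1. pose proof (AG z1 Re Rg t (Hin t Ht)) as HAG.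
    unfold Qf in Q1. assert (1 - G2 t <> 0) by (intro h; rewrite h in HAG; lra).
    apply (f_equal (fun u => u * (1 - G2 t))) in Q1. field_simplify in Q1; auto.
    rewrite Q1. lra. }
  unfold Lf in HW at 1. rewrite Rmult_0_l, E_0 in HW.
  assert (E (Lf y0) = E b0) by (fold y0; lra).
  apply E_inj in H. unfold Lf in H. exact H.
Qed.

Lemma phi_pos t : 0 < phi t.
Proof. unfold phi. apply Rdiv_lt_0_compat. apply exp_pos. apply sqrt2PI_pos. Qed.

Lemma E2_mono u v : u <= v -> E2 u <= E2 v.
Proof.
  intros H. apply (deriv_nonneg_le E2 phi); auto. intros; apply E2_deriv.
  intros; left; apply phi_pos.
Qed.

Definition kc := exp (1 / 2) / sqrt (2 * PI).

Lemma E2_lower v : v <= 0 -> - kc <= E2 v.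
Proof.
  intros Hv.
  assert (H : - (E2 v - kc * exp v) <= - (E2 0 - kc * exp 0)).
  { apply (deriv_nonneg_le (fun t => - (E2 t - kc * exp t)) (fun t => - (phi t - kc * exp t))); auto.
    - intros x _. apply (is_derive_opp (K:=R_AbsRing) (V:=R_NormedModule) (fun t => E2 t - kc * exp t)).
      apply (is_derive_minus (K:=R_AbsRing) (V:=R_NormedModule) E2 (fun t => kc * exp t)).
      apply E2_deriv. apply is_derive_scal, is_derive_exp.
    - intros x _. unfold phi, kc. pose proof sqrt2PI_pos.
      assert (exp (- (x ^ 2) / 2) <= exp (1 / 2) * exp x) by (rewrite <- exp_plus; apply exp_mono; replace (x ^ 2) with (x * x) by ring; assert (0 <= x * x + 2 * x + 1) by (replace (x * x + 2 * x + 1) with ((x + 1) * (x + 1)) by ring; apply Rle_0_sqr); lra).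
      assert (0 < / sqrt (2 * PI)) by (apply Rinv_0_lt_compat; auto).
      unfold Rdiv. nra. }
  rewrite exp_0, E2_0 in H. pose proof (exp_pos v).
  assert (0 < kc) by (unfold kc; apply Rdiv_lt_0_compat; [apply exp_pos|apply sqrt2PI_pos]).
  nra.
Qed.

Lemma E2_limit : exists la, filterlim E2 (Rbar_locally m_infty) (locally la).
Proof.
  set (S := fun r => exists v, r = - E2 v).
  assert (Hb : bound S).
  { exists kc. intros r [v ->]. destruct (Rle_lt_dec v 0).
    - pose proof (E2_lower v r). lra.
    - pose proof (E2_mono 0 v). rewrite E2_0 in H.
      assert (0 < kc) by (unfold kc; apply Rdiv_lt_0_compat; [apply exp_pos|apply sqrt2PI_pos]).
      lra. }
  assert (He : exists x, S x) by (exists (- E2 0); exists 0; auto).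
  destruct (completeness S Hb He) as [m [Hub Hlub]].
  exists (- m). apply filterlim_locally. intros eps.
  assert (Hex : exists v, m - eps < - E2 v).
  { apply Classical_Pred_Type.not_all_not_ex. intros Hn.
    assert (m <= m - eps). apply Hlub. intros r [v ->]. specialize (Hn v). lra.
    destruct eps; simpl in *; lra. }
  destruct Hex as [v Hv]. simpl. exists v. intros x Hx.
  assert (E2 x <= E2 v) by (apply E2_mono; lra).
  assert (- E2 x <= m) by (apply Hub; exists x; auto).
  change (Rabs (E2 x - - m) < eps). apply Rabs_def1; lra.
Qed.

Lemma filterlim_at_point_self (f : R -> R) u : filterlim f (at_point u) (locally (f u)).
Proof. intros P HP. unfold filtermap, at_point. apply locally_singleton. exact HP. Qed.

Lemma normal_cdf_E2 : exists la, forall u, normal_cdf u = E2 u - la.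
Proof.
  destruct E2_limit as [la Hla]. exists la. intros u.
  assert (HD : forall x, Derive E2 x = phi x) by (intros; apply is_derive_unique, E2_deriv).
  unfold normal_cdf. fold phi.
  apply is_RInt_gen_unique.
  apply (is_RInt_gen_ext (Derive E2)).
  - apply filter_forall. intros; apply HD.
  - apply is_RInt_gen_Derive; auto.
    + apply filter_forall. intros; eexists; apply E2_deriv.
    + apply filter_forall. intros. apply (continuous_ext phi). intros; symmetry; apply HD. apply phi_cont.
    + apply filterlim_at_point_self.
Qed.

Lemma E2_odd a : E2 (- a) = - E2 a.
Proof.
  assert (forall a, 0 <= a -> E2 0 + E2 (- 0) = E2 a + E2 (- a)).
  { intros b Hb. apply (deriv_zero_eq (fun s => E2 s + E2 (- s))); auto.
    intros x _. replace 0 with (phi x + (-1) * phi (- x)).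
    apply (is_derive_plus (K:=R_AbsRing) (V:=R_NormedModule) E2 (fun s => E2 (- s))).
    apply E2_deriv. apply (dcomp E2 (fun s => - s)). apply E2_deriv. auto_derive; auto.
    unfold phi. replace ((- x) ^ 2) with (x ^ 2) by ring. ring. }
  rewrite Ropp_0, E2_0 in H. destruct (Rle_dec 0 a).
  - specialize (H a r). lra.
  - specialize (H (- a)). rewrite Ropp_involutive in H. lra.
Qed.

Lemma BS_atm S T sig : 0 < S -> 0 < T -> 0 < sig ->
  BS S S T sig / S = 2 * E2 (sig * sqrt T / 2).
Proof.
  intros HS HT Hsig. destruct normal_cdf_E2 as [la Hla].
  assert (HsT : 0 < sqrt T) by (apply sqrt_lt_R0; auto).
  assert (Hp : d_plus S S T sig = sig * sqrt T / 2).
  { unfold d_plus. replace (S / S) with 1 by (field; lra). rewrite ln_1.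
    rewrite <- (pow2_sqrt T) at 1 by lra. field. lra. }
  assert (Hm : d_minus S S T sig = - (sig * sqrt T / 2)).
  { unfold d_minus. replace (S / S) with 1 by (field; lra). rewrite ln_1.
    rewrite <- (pow2_sqrt T) at 1 by lra. field. lra. }
  unfold BS. rewrite Hp, Hm, !Hla, E2_odd. field. lra.
Qed.

Theorem proposition6 (S T sigmaLN : R) (hS : 0 < S) (hT : 0 < T) (hsig : 0 < sigmaLN) :
  let C := BS S S T sigmaLN in
  exists l : R,
    is_series (fun k : nat => PI ^ k * eta k / (4 ^ k * (2 * INR k + 1)) * (C / S) ^ (2 * k)) l /\
    sigmaLN = sqrt (2 * PI / T) * (C / S) * l.
Proof.
  intros C. unfold C. rewrite BS_atm by auto.
  set (a := sigmaLN * sqrt T / 2).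
  assert (HsT : 0 < sqrt T) by (apply sqrt_lt_R0; auto).
  assert (Ha : 0 < a) by (unfold a; nra).
  assert (Hs2 : 0 < sqrt 2) by (apply sqrt_lt_R0; lra).
  assert (HsP : 0 < sqrt PI) by (apply sqrt_lt_R0; apply PI_RGT_0).
  set (b0 := a / sqrt 2).
  assert (Hb0 : 0 < b0) by (unfold b0; apply Rdiv_lt_0_compat; auto).
  destruct (core b0 Hb0) as [Hrad Heq].
  assert (HEb : E b0 = sqrt PI * E2 a).
  { unfold E, b0. f_equal. f_equal. field. lra. }
  assert (HEpos : 0 < E b0) by (rewrite <- E_0; apply E_lt; auto).
  set (z := E b0 ^ 2).
  exists (PSeries bcoef z). split.
  - pose proof (PSeries_correct bcoef z (CV_radius_inside _ _ Hrad)) as Hs.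
    unfold is_pseries in Hs. eapply is_series_ext; [|exact Hs].
    intros k. change (scal (pow_n z k) (bcoef k)) with (pow_n z k * bcoef k). rewrite pow_n_pow.
    unfold z. rewrite HEb. unfold bcoef.
    assert (Hk : ((sqrt PI * E2 a) ^ 2) ^ k * (eta k / (2 * INR k + 1)) =
       PI ^ k * eta k / (4 ^ k * (2 * INR k + 1)) * (2 * E2 a) ^ (2 * k)).
    { rewrite pow_mult.
      replace ((2 * E2 a) ^ 2) with (4 * E2 a ^ 2) by ring.
      replace ((sqrt PI * E2 a) ^ 2) with (PI * E2 a ^ 2) by (rewrite Rpow_mult_distr, pow2_sqrt; [ring| left; apply PI_RGT_0]).
      rewrite !Rpow_mult_distr.
      assert (0 < 4 ^ k) by (apply pow_lt; lra). assert (0 <= INR k) by apply pos_INR.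
      field. split; lra. }
    exact Hk.
  - fold z in Heq. rewrite HEb in Heq.
    assert (HE2 : 0 < E2 a) by (rewrite HEb in HEpos; apply (Rmult_lt_reg_l (sqrt PI)); [lra|rewrite Rmult_0_r; lra]).
    rewrite sqrt_div_alt, sqrt_mult_alt by lra.
    assert (0 < sqrt PI * E2 a) by (apply Rmult_lt_0_compat; lra).
    assert (HPS : PSeries bcoef z = b0 / (sqrt PI * E2 a)) by (rewrite <- Heq; field; lra).
    rewrite HPS. unfold b0, a in *. field. repeat split; lra.
Qed.
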